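(* Let $\psi\in\Psi$ satisfy $\limsup_{t\to\infty}\frac{\psi(2t)}{\psi(t)}<2$. If $0\le x\in M_\psi$, then there exists a constant $c(x)\in\mathbb{N}$ such that $n_x\big(\frac{\psi(t)}{t}\big)\le c(x)t$ for every sufficiently large $t$.
   Context: $\Psi$ is the class of concave increasing functions $\psi$ on $[0,\infty)$ with $\psi(\infty)=\infty$, $\psi(t)=O(t)$ as $t\to0$, $\psi(t)=o(t)$ as $t\to\infty$. For bounded measurable $x$ on $(0,\infty)$, $n_x(\lambda)=m(\{s:|x(s)|>\lambda\})$ and $x^*$ is the nonincreasing right-continuous rearrangement of $|x|$. $M_\psi$ is the space of bounded measurable $x$ with $\sup_{t>0}\frac1{\psi(t)}\int_0^tx^*(s)ds<\infty$. *)

(* Defs.v *)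
From HB Require Import structures.
From mathcomp Require Import all_boot all_order all_algebra.
From mathcomp Require Import all_classical all_reals all_analysis.
Set Implicit Arguments. Unset Strict Implicit. Unset Printing Implicit Defensive.
Import Order.TTheory GRing.Theory Num.Theory.
Import numFieldNormedType.Exports.
Local Open Scope classical_set_scope.
Local Open Scope ring_scope.

(* Functions on (0,oo) are represented as functions R -> R; only their
   values on (0,oo) are used. *)

Definition in_Psi (R : realType) (psi : R -> R) : Prop :=
  (forall s t a : R, 0 <= s -> 0 <= t -> 0 <= a -> a <= 1 ->
     (1 - a) * psi s + a * psi t <= psi ((1 - a) * s + a * t)) /\
  (forall s t : R, 0 <= s -> s <= t -> psi s <= psi t) /\
  (psi x @[x --> +oo] --> +oo) /\
  (exists C : R, exists2 d : R, 0 < d &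
     forall t : R, 0 < t -> t < d -> `|psi t| <= C * t) /\
  (psi t / t @[t --> +oo] --> 0).

Definition distr_fun (R : realType) (x : R -> R) (lam : R) : \bar R :=
  (@lebesgue_measure R) [set s : R | 0 < s /\ lam < `|x s|].

Definition rearr (R : realType) (x : R -> R) (t : R) : R :=
  inf [set lam : R | 0 <= lam /\ (distr_fun x lam <= t%:E)%E].

Definition bdd_meas (R : realType) (x : R -> R) : Prop :=
  measurable_fun (`]0, +oo[%classic : set R) x /\
  exists M : R, forall s : R, 0 < s -> `|x s| <= M.

Definition in_Mpsi (R : realType) (psi : R -> R) (x : R -> R) : Prop :=
  bdd_meas x /\
  (ereal_sup [set ((psi t)^-1)%:E *
                  (\int[@lebesgue_measure R]_(s in (`]0%R, t[%classic : set R)) (rearr x s)%:E)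
             | t in (`]0%R, +oo[%classic : set R)] < +oo)%E.

(* Main.v *)
Require Import Defs.
From HB Require Import structures.
From mathcomp Require Import all_boot all_order all_algebra.
From mathcomp Require Import all_classical all_reals all_analysis.
From mathcomp Require Import measurable_realfun lebesgue_integral.
From mathcomp Require Import ring lra.
Import Order.TTheory GRing.Theory Num.Theory.
Import numFieldNormedType.Exports.
Local Open Scope classical_set_scope.
Local Open Scope ring_scope.

Section Aux.
Variable R : realType.
Variable x : R -> R.
Hypothesis bx : bdd_meas x.

Lemma lvl_meas (lam : R) : measurable [set s : R | 0 < s /\ lam < `|x s|].
Proof.
have mx := bx.1.
have mn : measurable_fun (`]0, +oo[%classic : set R) (fun s => `|x s|).
  exact: (measurableT_comp (@measurable_realfun.normr_measurable R setT) mx).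
have H := mn (measurable_itv _) _ (measurable_itv `]lam, +oo[).
suff -> : [set s : R | 0 < s /\ lam < `|x s|] = (`]0, +oo[ `&` (fun s => `|x s|) @^-1` `]lam, +oo[)%classic by [].
by apply/seteqP; split => s /=; rewrite !in_itv /= !andbT.
Qed.

Lemma distr_mono (a b : R) : a <= b -> (distr_fun x b <= distr_fun x a)%E.
Proof.
move=> ab; apply: le_measure; rewrite ?inE; try exact: lvl_meas.
by move=> s [s0 bs]; split => //; apply: le_lt_trans bs.
Qed.

Lemma distr_big : exists M : R, 0 <= M /\ distr_fun x M = 0%E.
Proof.
have [M HM] := bx.2.
have M0 : 0 <= M by apply: le_trans (HM 1 ltr01).
exists M; split => //.
rewrite /distr_fun.
have -> : [set s : R | 0 < s /\ M < `|x s|] = set0.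
  apply/seteqP; split => s //= [s0]; by rewrite ltNge HM.
exact: measure0.
Qed.

Definition Eset (s : R) := [set lam : R | 0 <= lam /\ (distr_fun x lam <= s%:E)%E].

Lemma Eset_n0 s : 0 <= s -> Eset s !=set0.
Proof.
move=> s0; have [M [M0 HM]] := distr_big; exists M; split => //.
by rewrite HM lee_fin.
Qed.

Lemma Eset_lb s : has_lbound (Eset s).
Proof. by exists 0 => l [] . Qed.

Lemma rearr_ge0 s : 0 <= rearr x s.
Proof.
rewrite /rearr; have [s0|s0] := leP 0 s.
  by apply: lb_le_inf; [exact: Eset_n0| move=> l []].
rewrite (_ : [set _ | _] = set0) ?inf0 //.
apply/seteqP; split => l //= [_ h]; have := le_trans (measure_ge0 _ _) h.
by rewrite lee_fin leNgt s0.
Qed.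

Lemma rearr_mono s t : 0 <= s -> s <= t -> rearr x t <= rearr x s.
Proof.
move=> s0 st; rewrite /rearr; apply: lb_le_inf; first exact: Eset_n0.
move=> l [l0 hl]; apply: ge_inf; first exact: Eset_lb.
by split => //; apply: le_trans hl _; rewrite lee_fin.
Qed.

Lemma rearr_meas (D : set R) : measurable D -> D `<=` `]0, +oo[%classic ->
  measurable_fun D (EFin \o rearr x).
Proof.
move=> mD DP; apply/(@measurable_EFinP _ _ R D (rearr x)).
apply: (@eq_measurable_fun _ _ _ _ D (fun s : R => rearr x (Num.max s 0))).
  move=> s; rewrite inE => /DP; rewrite /= in_itv /= andbT => s0.
  by rewrite max_l // ltW.
apply: nonincreasing_measurable => // a b ab; apply: rearr_mono.
  by rewrite le_max lexx orbT.
have [a0|a0] := leP a 0; have [b0|b0] := leP b 0.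
all: try done; try exact: ltW; try exact: le_trans ab (ltW b0).
by move: (lt_le_trans a0 (le_trans ab b0)); rewrite ltxx.
Qed.



Lemma int_lb (lam m : R) : 0 <= lam -> 0 < m -> (m%:E < distr_fun x lam)%E ->
  ((lam * m)%:E <= \int[@lebesgue_measure R]_(s in (`]0%R, m[%classic : set R)) (rearr x s)%:E)%E.
Proof.
move=> l0 m0 Hm.
have key : forall s, 0 < s -> s < m -> lam <= rearr x s.
  move=> s s0 sm; rewrite /rearr; apply: lb_le_inf; first exact: Eset_n0 (ltW s0).
  move=> l [_ hl]; rewrite leNgt; apply/negP => ll.
  have := lt_le_trans Hm (le_trans (@distr_mono l lam (ltW ll)) hl).
  by rewrite lte_fin ltNge (ltW sm).
apply: (@le_trans _ _ (\int[@lebesgue_measure R]_(s in (`]0%R, m[%classic : set R)) (cst lam%:E) s)%E).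
  rewrite integral_cst //= lebesgue_measure_itv /= lte_fin m0.
  by rewrite oppr0 addr0 -EFinM.
apply: ge0_le_integral => //.
- apply: rearr_meas => // s /=; rewrite !in_itv /= => /andP[s0 _]; by rewrite s0.
- by move=> s /=; rewrite in_itv /= => /andP[s0 sm]; rewrite lee_fin key.
Qed.

End Aux.
Section Main.
Variable R : realType.
Local Open Scope ereal_scope.

Lemma Mpsi_K (psi x : R -> R) : in_Mpsi psi x -> exists K : R, forall u : R, (0 < u)%R ->
  ((psi u)^-1)%:E * (\int[@lebesgue_measure R]_(s in (`]0%R, u[%classic : set R)) (rearr x s)%:E) <= K%:E.
Proof.
move=> [_ Hs].
set S := [set _ | _ in _] in Hs.
have ub : forall u : R, (0 < u)%R ->
  ((psi u)^-1)%:E * (\int[@lebesgue_measure R]_(s in (`]0%R, u[%classic : set R)) (rearr x s)%:E) <= ereal_sup S.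
  move=> u u0; apply: ereal_sup_ubound; exists u => //=; by rewrite in_itv /= u0.
move: Hs ub; case: (ereal_sup S) => [r| |] // _ ub.
- by exists r.
- by exists 0%R; move=> u u0; exact: le_trans (ub u u0) (leNye _).
Qed.

Lemma geomk (q K : R) : (0 <= q)%R -> (q < 2)%R -> exists k : nat, (K * q ^+ k < 2 ^+ k)%R.
Proof.
move=> q0 q2.
have hq : (`|q / 2| < 1)%R by rewrite ger0_norm ?divr_ge0 // ltr_pdivrMr // mul1r.
have e0 : (0 < (`|K| + 1)^-1)%R by rewrite invr_gt0 ltr_wpDl.
have [N _ HN] := (cvgrPdist_lt _ _).1 (cvg_expr hq) _ e0.
exists N; have := HN N (leqnn N); rewrite sub0r normrN.
rewrite expr_div_n ger0_norm ?divr_ge0 ?exprn_ge0 // => h.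
have p0 : (0 < (2:R) ^+ N)%R by rewrite exprn_gt0.
have K1 : (0 < `|K| + 1)%R by rewrite ltr_wpDl.
rewrite ltr_pdivrMr // in h.
have : (q ^+ N * (`|K| + 1) < 2 ^+ N)%R.
  by rewrite -ltr_pdivlMr // mulrC.
have qN : (0 <= q ^+ N)%R by rewrite exprn_ge0.
have := ler_norm K. nra.
Qed.


Lemma limsup_q (psi : R -> R) : in_Psi psi ->
  limf_esup (fun t : R => (psi (2 * t) / psi t)%:E) (@pinfty_nbhs R) < 2%:E ->
  exists q T : R, (1 <= q)%R /\ (q < 2)%R /\
    forall t, (`|T| < t)%R -> (0 < psi t)%R /\ (psi (2 * t) <= q * psi t)%R.
Proof.
move=> [_ [_ [pinf _]]] /ereal_inf_lt [y [V FV <-] ylt].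
have [q0 [q02 Hq0]] : exists q0 : R, (q0 < 2)%R /\
    forall t, V t -> (psi (2 * t) / psi t <= q0)%R.
  move: ylt; case E : (ereal_sup _) => [r| |] //.
  - rewrite lte_fin => r2; exists r; split => // t Vt.
    by rewrite -lee_fin -E; apply: ereal_sup_ubound; exists t.
  - move=> _; exists 0%R; split => // t Vt.
    have : (psi (2 * t) / psi t)%:E <= -oo.
      by rewrite -E; apply: ereal_sup_ubound; exists t.
    by rewrite leeNy_eq.
have [q [q1 [q2 qq]]] : exists q : R, (1 <= q)%R /\ (q < 2)%R /\ (q0 <= q)%R.
  have [h|h] := leP 1%R q0; first by exists q0.
  by exists 1%R; split => //; split; [lra|exact: ltW].
have Hp : \forall t \near +oo%R, (0 < psi t)%R /\ V t.
  near=> t; split.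
    near: t; apply: filterS ((cvgryPge _).1 pinf 1%R) => t h.
    exact: lt_le_trans ltr01 h.
  by near: t; exact: FV.
have [M [_ HM]] := Hp.
exists q, M; split => //; split => // t Mt.
have [p0 Vt] := HM t (le_lt_trans (ler_norm M) Mt).
split => //.
have := le_trans (Hq0 t Vt) qq.
by rewrite ler_pdivrMr.
Unshelve. all: end_near.
Qed.

End Main.

Theorem lemma3p1 (R : realType) (psi : R -> R) (x : R -> R) :
  in_Psi psi ->
  (limf_esup (fun t : R => (psi (2 * t) / psi t)%:E) (@pinfty_nbhs R) < 2%:E)%E ->
  (forall s : R, 0 < s -> 0 <= x s) ->
  in_Mpsi psi x ->
  exists c : nat, \forall t \near +oo,
    (distr_fun x (psi t / t) <= (c%:R * t)%:E)%E.
Proof.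
move=> Hpsi Hls _ Hx.
have bx := Hx.1.
have [K HK] := @Mpsi_K R psi x Hx.
have [q [T [q1 [q2 HT]]]] := @limsup_q R psi Hpsi Hls.
have q0 : 0 <= q by lra.
have iter : forall t, `|T| < t -> forall k : nat, psi (2 ^+ k * t) <= q ^+ k * psi t.
  move=> t Tt; elim=> [|k IH]; first by rewrite !expr0 !mul1r.
  have t0 : 0 < t := le_lt_trans (normr_ge0 T) Tt.
  have Tk : `|T| < 2 ^+ k * t.
    apply: lt_le_trans Tt _; have : (1 <= (2:R) ^+ k) by apply: exprn_ege1; lra.
    nra.
  have [_ h] := HT _ Tk.
  rewrite exprS -mulrA; apply: le_trans h _.
  by rewrite exprS -mulrA; apply: ler_wpM2l.
have [k0 Hk0] := @geomk R q K q0 q2.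
exists (2 ^ k0)%N; exists `|T|; split; first by rewrite realE normr_ge0.
move=> t Tt; rewrite natrX leNgt; apply/negP => Hn.
set P := (2%:R : R) ^+ k0 in Hn *.
have t0 : 0 < t := le_lt_trans (normr_ge0 T) Tt.
have P1 : 1 <= P by apply: exprn_ege1; lra.
have [pt0 _] := HT t Tt.
have lam0 : 0 < psi t / t by rewrite divr_gt0.
have u0 : 0 < P * t by nra.
have Tu : `|T| < P * t by nra.
have [pu0 _] := HT _ Tu.
have lb := @int_lb R x bx (psi t / t) (P * t) (ltW lam0) u0 Hn.
have ub := HK (P * t) u0.
have : (((psi (P * t))^-1 * (psi t / t * (P * t)))%:E <= K%:E)%E.
  apply: le_trans ub; rewrite EFinM; apply: lee_wpmul2l => //.
  by rewrite lee_fin invr_ge0 ltW.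
rewrite lee_fin => H.
have E : psi t / t * (P * t) = psi t * P by field; exact: lt0r_neq0.
have it := iter t Tt k0.
rewrite E ler_pdivrMl // in H.
have K0 : 0 <= K.
  have : 0 < psi t * P by nra.
  nra.
change ((2:R) ^+ k0) with P in Hk0; change ((2:R) ^+ k0) with P in it.
have A : psi (P * t) * K <= q ^+ k0 * psi t * K by rewrite ler_wpM2r.
move: H A Hk0 pt0; clear -q0; move: (q ^+ k0) (psi t) (psi (P * t)) => Q a b.
nra.
Qed.
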